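(* Let $\mathbf{X}$ be an observation generated under one of two hypotheses $\mathrm{H}_0,\mathrm{H}_1$ with prior probabilities $P(\mathrm{H}_0),P(\mathrm{H}_1)$; under $\mathrm{H}_i$ a random parameter $\Theta_i\in\Lambda_i\subseteq\mathbb{R}$ has known prior density $p(\theta_i\mid\mathrm{H}_i)$. Let non-negative coefficients $\lambda_i,\mu_i$, $i\in\{0,1\}$, be given, and fixed families of densities $p^{\mathrm D}_{i,\theta_i}$ and $p^{\mathrm E}_{i,\theta_i}$, $i\in\{0,1\}$, $\theta_i\in\Lambda_i$. Then the policy $\pi^\star=(\delta^\star,\hat\theta_0^\star,\hat\theta_1^\star)$ minimizing $$J^{\mathrm{NP}}_{\mathrm u}(\pi)=\sum_{i=0}^1P(\mathrm{H}_i)\bigl(\lambda_i\alpha_i(\pi,p^{\mathrm D}_{i,\theta_i})+\mu_i\beta_i(\pi,p^{\mathrm E}_{i,\theta_i})\bigr)$$ is given by $$\delta^\star(\mathbf{x})=\begin{cases}0,&D_0^{\mathrm{NP}}(\mathbf{x})<D_1^{\mathrm{NP}}(\mathbf{x}),\\ \kappa\in[0,1],&D_0^{\mathrm{NP}}(\mathbf{x})=D_1^{\mathrm{NP}}(\mathbf{x}),\\ 1,&D_0^{\mathrm{NP}}(\mathbf{x})>D_1^{\mathrm{NP}}(\mathbf{x}),\end{cases}\qquad \hat\theta_i^\star(\mathbf{x})=\mathbb{E}_{p^{\mathrm E}_{i,\theta_i}}[\Theta_i\mid\mathrm{H}_i,\mathbf{x}],$$ with $$D_i^{\mathrm{NP}}(\mathbf{x})=P(\mathrm{H}_{1-i})\lambda_{1-i}\,p^{\mathrm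 D}(\mathbf{x}\mid\mathrm{H}_{1-i})+P(\mathrm{H}_i)\mu_i\,\mathrm{Var}_{p^{\mathrm E}_{i,\theta_i}}[\Theta_i\mid\mathrm{H}_i,\mathbf{x}]\,p^{\mathrm E}(\mathbf{x}\mid\mathrm{H}_i).$$ Moreover, $J^{\mathrm{NP}}_{\mathrm u}(\pi^\star)=\int\min\{D_0^{\mathrm{NP}}(\mathbf{x}),D_1^{\mathrm{NP}}(\mathbf{x})\}\,\mathrm{d}\mathbf{x}$.
   Context: A policy $\pi=(\delta,\hat\theta_0,\hat\theta_1)$ consists of a randomized decision rule $\delta$ mapping observations to $[0,1]$ (probability of accepting $\mathrm{H}_1$) and estimators $\hat\theta_i$ with values in $\Lambda_i$. Error probabilities computed with the densities $p^{\mathrm D}$: $\alpha_0(\pi,p^{\mathrm D}_{0,\theta_0})=\iint\delta(\mathbf{x})p^{\mathrm D}_{0,\theta_0}(\mathbf{x})p(\theta_0\mid\mathrm{H}_0)\mathrm{d}\mathbf{x}\mathrm{d}\theta_0$, $\alpha_1(\pi,p^{\mathrm D}_{1,\theta_1})=\iint(1-\delta(\mathbf{x}))p^{\mathrm D}_{1,\theta_1}(\mathbf{x})p(\theta_1\mid\mathrm{H}_1)\mathrm{d}\mathbf{x}\mathrm{d}\theta_1$. Estimation errors computed with the densities $p^{\mathrm E}$: $\beta_0=\iint(1-\delta)(\hat\theta_0-\theta_0)^2p^{\mathrm E}_{0,\theta_0}(\mathbf{x})p(\theta_0\mid\mathrm{H}_0)\mathrm{d}\mathbf{x}\mathrm{d}\theta_0$,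 $\beta_1=\iint\delta(\hat\theta_1-\theta_1)^2p^{\mathrm E}_{1,\theta_1}(\mathbf{x})p(\theta_1\mid\mathrm{H}_1)\mathrm{d}\mathbf{x}\mathrm{d}\theta_1$. Marginals: $p^{\mathrm D}(\mathbf{x}\mid\mathrm{H}_i)=\int p^{\mathrm D}_{i,\theta_i}(\mathbf{x})p(\theta_i\mid\mathrm{H}_i)\mathrm{d}\theta_i$ and similarly $p^{\mathrm E}(\mathbf{x}\mid\mathrm{H}_i)$. Posterior mean and variance $\mathbb{E}_{p^{\mathrm E}_{i,\theta_i}}[\Theta_i\mid\mathrm{H}_i,\mathbf{x}]$, $\mathrm{Var}_{p^{\mathrm E}_{i,\theta_i}}[\Theta_i\mid\mathrm{H}_i,\mathbf{x}]$ are w.r.t. the posterior density $\propto p^{\mathrm E}_{i,\theta_i}(\mathbf{x})p(\theta_i\mid\mathrm{H}_i)$. *)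

(* Defs.v *)
From HB Require Import structures.
From mathcomp Require Import all_boot all_order all_algebra.
From mathcomp Require Import all_classical all_reals all_analysis.
Set Implicit Arguments. Unset Strict Implicit. Unset Printing Implicit Defensive.
Import Order.TTheory GRing.Theory Num.Theory.
Import numFieldNormedType.Exports.
Local Open Scope classical_set_scope.
Local Open Scope ring_scope.

(* Conventions: the two hypotheses are indexed by [i : bool],
   [false] = H_0, [true] = H_1, so that "1 - i" is [~~ i].
   Observation space: a measurable type [X] with a sigma-finite reference
   measure [mu] (the "dx").  Parameters live in [R] with Lebesgue measure
   (the "dtheta"). *)

Section Defs.
Context (R : realType) (d : measure_display) (X : measurableType d).
Context (mu : {measure set X -> \bar R}).
Notation leb := (@lebesgue_measure R).

Variables (Lam : bool -> set R) (prior : bool -> R -> R)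
          (pD pE : bool -> R -> X -> R).

Definition wD (i : bool) (delta : X -> R) (x : X) : R :=
  if i then 1 - delta x else delta x.
Definition wE (i : bool) (delta : X -> R) (x : X) : R :=
  if i then delta x else 1 - delta x.

Definition alpha (i : bool) (delta : X -> R) : \bar R :=
  (\int[mu]_x \int[leb]_(t in Lam i)
      (wD i delta x * pD i t x * prior i t)%:E)%E.

Definition beta (i : bool) (delta : X -> R) (thhat : bool -> X -> R) : \bar R :=
  (\int[mu]_x \int[leb]_(t in Lam i)
      (wE i delta x * (thhat i x - t) ^+ 2 * pE i t x * prior i t)%:E)%E.

Definition J_NP (PH lam mu_ : bool -> R)
  (delta : X -> R) (thhat : bool -> X -> R) : \bar R :=
  (\sum_(i : bool) ((PH i * lam i)%:E * alpha i delta
                    + (PH i * mu_ i)%:E * beta i delta thhat))%E.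

(* marginal p^D(x | H_i) (possibly +oo, extended real) *)
Definition margD (i : bool) (x : X) : \bar R :=
  (\int[leb]_(t in Lam i) (pD i t x * prior i t)%:E)%E.

(* marginal p^E(x | H_i) (real-valued; finite under the hypotheses) *)
Definition margE (i : bool) (x : X) : R :=
  \int[leb]_(t in Lam i) (pE i t x * prior i t).

(* posterior mean E_{pE}[Theta_i | H_i, x], posterior density
   proportional to pE_{i,theta}(x) p(theta|H_i) *)
Definition post_mean (i : bool) (x : X) : R :=
  (\int[leb]_(t in Lam i) (t * pE i t x * prior i t)) / margE i x.

Definition post_var (i : bool) (x : X) : R :=
  (\int[leb]_(t in Lam i) ((t - post_mean i x) ^+ 2 * pE i t x * prior i t))
  / margE i x.

Definition D_NP (PH lam mu_ : bool -> R) (i : bool) (x : X) : \bar R :=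
  ((PH (~~ i) * lam (~~ i))%:E * margD (~~ i) x
   + (PH i * mu_ i * post_var i x * margE i x)%:E)%E.

End Defs.

(* Main.v *)
Require Import Defs.
From HB Require Import structures.
From mathcomp Require Import all_boot all_order all_algebra.
From mathcomp Require Import all_classical all_reals all_analysis.
From mathcomp Require Import measurable_realfun.
From mathcomp Require Import lra ring.
Import Order.TTheory GRing.Theory Num.Theory.
Import numFieldNormedType.Exports.
Local Open Scope classical_set_scope.
Local Open Scope ring_scope.

Section Quad.
Context (R : realType).
Notation leb := (@lebesgue_measure R).
Variables (L : set R) (mL : measurable L) (w : R -> R).
Hypothesis w0 : forall t, 0 <= w t.
Hypothesis mw : measurable_fun setT w.
Hypothesis iw : leb.-integrable L (fun t => (w t)%:E).
Hypothesis iw2 : leb.-integrable L (fun t => (t ^+ 2 * w t)%:E).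

Lemma iquad (c : R) : leb.-integrable L (fun t => ((c - t) ^+ 2 * w t)%:E).
Proof.
apply: (@le_integrable _ _ _ leb L mL _
   (fun t => ((2 * c ^+ 2)%:E * (w t)%:E + 2%:E * (t ^+ 2 * w t)%:E)%E)).
- apply/measurable_EFinP; apply: measurable_funM => //.
    apply: measurable_funX; apply: measurable_funB => //.
  exact: measurable_funTS.
- move=> t _; rewrite -!EFinM -EFinD lee_fin !ger0_norm.
  + rewrite -subr_ge0 (_ : _ - _ = (c + t) ^+ 2 * w t); last by ring.
    exact: mulr_ge0 (sqr_ge0 _) (w0 t).
  + have := w0 t; have := sqr_ge0 c; have := sqr_ge0 t; nra.
  + by apply: mulr_ge0 => //; apply: sqr_ge0.
- apply: integrableD => //; apply: integrableZl => //.
Qed.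

Lemma ilin : leb.-integrable L (fun t => (t * w t)%:E).
Proof.
apply: (@le_integrable _ _ _ leb L mL _
   (fun t => ((w t)%:E + (t ^+ 2 * w t)%:E)%E)).
- apply/measurable_EFinP; apply: measurable_funM => //.
  exact: measurable_funTS.
- move=> t _; rewrite -EFinD lee_fin normrM (ger0_norm (w0 t)) [X in _ <= X]ger0_norm.
  + have := w0 t; have := mulr_ge0 (sqr_ge0 (`|t| - 1)) (w0 t).
    have := mulr_ge0 (sqr_ge0 t) (w0 t).
    have e : `|t| ^+ 2 = t ^+ 2 by rewrite real_normK ?num_real.
    nra.
  + by apply: addr_ge0 => //; apply: mulr_ge0 => //; apply: sqr_ge0.
- exact: integrableD.
Qed.


Let Ri (f : R -> R) := \int[leb]_(t in L) f t.
Definition qM := Ri w.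
Definition qT := Ri (fun t => t * w t).
Definition qS := Ri (fun t => t ^+ 2 * w t).
Definition qQ (c : R) := Ri (fun t => (c - t) ^+ 2 * w t).

Lemma qQE c : qQ c = c ^+ 2 * qM - 2 * c * qT + qS.
Proof.
rewrite /qQ /Ri; transitivity (\int[leb]_(t in L) (c ^+ 2 * w t + ((- (2 * c)) * (t * w t) + t ^+ 2 * w t))).
  by apply: eq_Rintegral => t _; ring.
rewrite RintegralD //; last first.
  have h1 := @integrableZl _ _ _ leb L mL (- (2 * c)) _ ilin.
  have h2 := @integrableD _ _ _ leb L mL _ _ h1 iw2.
  apply: (@eq_integrable _ _ _ leb L mL _ _ _ h2).
  by move=> t _ /=; rewrite EFinD EFinM.
  exact: (@integrableZl _ _ _ leb L mL _ _ iw).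
rewrite RintegralD //; last exact: (@integrableZl _ _ _ leb L mL _ _ ilin).
rewrite !RintegralZl //; last exact: ilin.
rewrite /qM /qT /qS /Ri; ring.
Qed.

Lemma qTE : qT = (qQ (-1) - qQ 1) / 4.
Proof. by rewrite !qQE; field. Qed.

Lemma qQ_ge0 c : 0 <= qQ c.
Proof. apply: Rintegral_ge0 => t _; apply: mulr_ge0 => //; exact: sqr_ge0. Qed.

Lemma qQ_min c : 0 < qM -> qQ (qT / qM) <= qQ c.
Proof.
move=> M0; set m := qT / qM.
have hT : qT = m * qM by rewrite /m divfK // gt_eqF.
rewrite -subr_ge0 !qQE hT (_ : _ - _ = (c - m) ^+ 2 * qM); last by ring.
by apply: mulr_ge0 => //; [exact: sqr_ge0 | exact: ltW].
Qed.

Lemma qM0 : qM = 0 -> qS = 0.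
Proof.
move=> M0.
have iw0 : (\int[leb]_(t in L) (w t)%:E = 0)%E.
  rewrite -(fineK (@integrable_fin_num _ _ _ leb L mL _ iw)).
  by move: M0; rewrite /qM /Ri /Rintegral => ->.
have h0 : ae_eq leb L (fun t => (w t)%:E) (cst 0%E).
  apply/(@ae_eq_integral_abs _ _ _ leb L mL).
    by apply/measurable_EFinP; exact: measurable_funTS.
  by rewrite -iw0; apply: eq_integral => t _; rewrite gee0_abs // lee_fin.
have ae2 : ae_eq leb L (fun t => (t ^+ 2 * w t)%:E) (cst 0%E).
  move: h0; apply: filterS => t /= h Lt.
  by move: (h Lt) => [->]; rewrite mulr0.
rewrite /qS /Ri /Rintegral (ae_eq_integral (cst 0%E)) //.
- by rewrite integral0.
- by apply/measurable_EFinP; apply: measurable_funM => //; exact: measurable_funTS.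
Qed.
End Quad.
Arguments qM {R} L w.
Arguments qT {R} L w.
Arguments qS {R} L w.
Arguments qQ {R} L w c.
Arguments qQE {R L} mL {w}.
Arguments qTE {R L} mL {w}.
Arguments qQ_min {R L} mL {w}.
Arguments qM0 {R L} mL {w}.
Arguments iquad {R L} mL {w}.
Arguments qQ_ge0 {R L w}.
Section Param.
Context (R : realType) (d : measure_display) (X : measurableType d).
Notation leb := (@lebesgue_measure R).

Lemma meas_param (L : set R) (mL : measurable L) (g : X -> R -> R)
  (mg : measurable_fun setT (fun z : X * R => g z.1 z.2))
  (g0 : forall x t, 0 <= g x t) :
  measurable_fun setT (fun x => \int[leb]_(t in L) (g x t)%:E)%E.
Proof.
have -> : (fun x => \int[leb]_(t in L) (g x t)%:E)%E =
  fubini_F leb (fun z : X * R => (g z.1 z.2 * \1_L z.2)%:E).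
  apply/funext => x; rewrite /fubini_F [LHS]integral_mkcond; apply: eq_integral => t _.
  rewrite /patch indicE; case: (t \in L); by rewrite ?mulr1 ?mulr0.
apply: measurable_fun_fubini_tonelli_F.
- apply/measurable_EFinP; apply: measurable_funM => //.
  apply: measurableT_comp; [exact: measurable_indic | exact: measurable_snd].
- by move=> z; rewrite lee_fin mulr_ge0.
Qed.
End Param.
Arguments meas_param {R d X L} mL g.
Lemma meas_inv (R : realType) : measurable_fun setT (@GRing.inv R).
Proof.
have -> : (@GRing.inv R) = (fun x : R => if x == 0 then 0 else x^-1).
  by apply/funext => x; case: eqP => // ->; rewrite invr0.
apply: measurable_fun_if => //.
- by apply: measurable_fun_eqr => //; exact: measurable_cst.
- rewrite (_ : _ `&` _ = ~` [set 0]); last first.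
    apply/seteqP; split => x /=.
      by move=> [_ /eqP ?].
    by move=> /eqP /negbTE ->.
  apply: open_continuous_measurable_fun.
    rewrite openC; apply: compact_closed; [exact: Rhausdorff | exact: compact_set1].
  move=> x /set_mem /= /eqP x0; exact: inv_continuous.
Qed.
Section Pure.
Context (R : realType).
Local Open Scope ereal_scope.

Lemma convex_min (δ : R) (a b : \bar R) : (0 <= δ <= 1)%R -> 0 <= a -> 0 <= b ->
  mine a b <= δ%:E * b + (1 - δ)%:E * a.
Proof.
move=> /andP[d0 d1] a0 b0.
have d0' : 0 <= (1 - δ)%:E by rewrite lee_fin subr_ge0.
have d0'' : 0 <= δ%:E by rewrite lee_fin.
have e1 : forall c : \bar R, δ%:E * c + (1 - δ)%:E * c = c.
  by move=> c; rewrite -ge0_muleDl // -EFinD addrC subrK mul1e.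
case: (leP a b) => ab.
- by rewrite -{1}[a]e1 leeD2r // lee_wpmul2l.
- by rewrite -{1}[b]e1 leeD2l // lee_wpmul2l // ltW.
Qed.


Lemma G_conv (k1 k2 k3 k4 δ q0 q1 : R) (a0 a1 : \bar R) :
  (0 <= k1)%R -> (0 <= k2)%R -> (0 <= k3)%R -> (0 <= k4)%R ->
  0 <= a0 -> 0 <= a1 -> (0 <= q0)%R -> (0 <= q1)%R ->
  (k1%:E * ((1 - δ)%:E * a1) + k2%:E * (δ * q1)%:E)
   + (k3%:E * (δ%:E * a0) + k4%:E * ((1 - δ) * q0)%:E)
  = δ%:E * (k3%:E * a0 + (k2 * q1)%:E) + (1 - δ)%:E * (k1%:E * a1 + (k4 * q0)%:E).
Proof.
move=> k10 k20 k30 k40 a00 a10 q00 q10.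
rewrite ge0_muleDr; last 2 first.
  by rewrite mule_ge0.
  by rewrite lee_fin mulr_ge0.
rewrite ge0_muleDr; last 2 first.
  by rewrite mule_ge0.
  by rewrite lee_fin mulr_ge0.
rewrite (muleCA k1%:E) (muleCA k3%:E) -!EFinM (mulrCA k2) (mulrCA k4).
rewrite addeACA (addeC (_ * (_ * a1))) addeACA.
by [].
Qed.

Lemma G_lb (k1 k2 k3 k4 δ q0 q1 V0 V1 : R) (a0 a1 : \bar R) :
  (0 <= k1)%R -> (0 <= k2)%R -> (0 <= k3)%R -> (0 <= k4)%R -> (0 <= δ <= 1)%R ->
  0 <= a0 -> 0 <= a1 -> (0 <= V0 <= q0)%R -> (0 <= V1 <= q1)%R ->
  mine (k1%:E * a1 + (k4 * V0)%:E) (k3%:E * a0 + (k2 * V1)%:E) <=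
  (k1%:E * ((1 - δ)%:E * a1) + k2%:E * (δ * q1)%:E)
   + (k3%:E * (δ%:E * a0) + k4%:E * ((1 - δ) * q0)%:E).
Proof.
move=> k10 k20 k30 k40 hd a00 a10 /andP[V00 Vq0] /andP[V10 Vq1].
have d0 := hd; move/andP: d0 => [d0 d1].
rewrite G_conv //; last 2 first.
  exact: le_trans Vq0.
  exact: le_trans Vq1.
apply: le_trans (convex_min _ _ _ hd _ _) _.
- by rewrite adde_ge0 ?mule_ge0 // lee_fin mulr_ge0.
- by rewrite adde_ge0 ?mule_ge0 // lee_fin mulr_ge0.
apply: leeD; apply: lee_wpmul2l; rewrite ?lee_fin ?subr_ge0 //;
  apply: leeD2l; rewrite lee_fin; exact: ler_wpM2l.
Qed.

Lemma G_eq (k1 k2 k3 k4 δ q0 q1 : R) (a0 a1 : \bar R) :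
  (0 <= k1)%R -> (0 <= k2)%R -> (0 <= k3)%R -> (0 <= k4)%R -> (0 <= δ <= 1)%R ->
  0 <= a0 -> 0 <= a1 -> (0 <= q0)%R -> (0 <= q1)%R ->
  (k1%:E * a1 + (k4 * q0)%:E < k3%:E * a0 + (k2 * q1)%:E -> δ = 0%R) ->
  (k1%:E * a1 + (k4 * q0)%:E > k3%:E * a0 + (k2 * q1)%:E -> δ = 1%R) ->
  (k1%:E * ((1 - δ)%:E * a1) + k2%:E * (δ * q1)%:E)
   + (k3%:E * (δ%:E * a0) + k4%:E * ((1 - δ) * q0)%:E)
  = mine (k1%:E * a1 + (k4 * q0)%:E) (k3%:E * a0 + (k2 * q1)%:E).
Proof.
move=> k10 k20 k30 k40 hd a00 a10 q00 q10 h0 h1.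
have d0 := hd; move/andP: d0 => [d0 d1].
rewrite G_conv //.
case: ltgtP => h.
- by rewrite (h0 h) mul0e add0e subr0 mul1e.
- by rewrite (h1 h) mul1e subrr mul0e adde0.
- rewrite h -ge0_muleDl ?lee_fin ?subr_ge0 //.
  by rewrite -EFinD addrC subrK mul1e.
Qed.
End Pure.
Section Main.
Context (R : realType) (d : measure_display) (X : measurableType d)
  (mu : {measure set X -> \bar R})
  (PH lam mu_ : bool -> R)
  (Lam : bool -> set R) (prior : bool -> R -> R)
  (pD pE : bool -> R -> X -> R).
Notation leb := (@lebesgue_measure R).
Hypothesis PH0 : forall i, 0 <= PH i.
Hypothesis lam0 : forall i, 0 <= lam i.
Hypothesis mu0 : forall i, 0 <= mu_ i.
Hypothesis mLam : forall i, measurable (Lam i).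
Hypothesis prior0 : forall i t, 0 <= prior i t.
Hypothesis mprior : forall i, measurable_fun [set: R] (prior i).
Hypothesis pD0 : forall i t x, 0 <= pD i t x.
Hypothesis pE0 : forall i t x, 0 <= pE i t x.
Hypothesis mpD : forall i, measurable_fun [set: R * X] (fun z => pD i z.1 z.2).
Hypothesis mpE : forall i, measurable_fun [set: R * X] (fun z => pE i z.1 z.2).
Hypothesis iE : forall i x, lebesgue_measure.-integrable (Lam i)
                 (fun t => (pE i t x * prior i t)%:E).
Hypothesis iE2 : forall i x, lebesgue_measure.-integrable (Lam i)
                 (fun t => (t ^+ 2 * pE i t x * prior i t)%:E).

Definition wf i x t := pE i t x * prior i t.
Lemma wf0 i x t : 0 <= wf i x t.
Proof. exact: mulr_ge0. Qed.
Lemma mwf i x : measurable_fun setT (wf i x).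
Proof.
apply: measurable_funM => //.
exact: (measurable_fun_pair1 (f := fun z : R * X => pE i z.1 z.2) x (mpE i)).
Qed.
Lemma iwf i x : leb.-integrable (Lam i) (fun t => (wf i x t)%:E).
Proof. exact: iE. Qed.
Lemma iwf2 i x : leb.-integrable (Lam i) (fun t => (t ^+ 2 * wf i x t)%:E).
Proof.
apply: (@eq_integrable _ _ _ leb (Lam i) (mLam i) _ _ _ (iE2 i x)).
by move=> t _; rewrite /wf mulrA.
Qed.

Notation M i x := (qM (Lam i) (wf i x)).
Notation Q i x := (qQ (Lam i) (wf i x)).

Lemma pm_q i x : post_mean Lam prior pE i x = qT (Lam i) (wf i x) / M i x.
Proof.
rewrite /post_mean; congr (_ / _).
by apply: eq_Rintegral => t _; rewrite /wf mulrA.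
Qed.

Lemma pv_q i x : post_var Lam prior pE i x * margE Lam prior pE i x
  = Q i x (post_mean Lam prior pE i x).
Proof.
set pm := post_mean Lam prior pE i x.
have e : \int[leb]_(t in Lam i) ((t - pm) ^+ 2 * pE i t x * prior i t) = Q i x pm.
  by apply: eq_Rintegral => t _; rewrite /wf; ring.
rewrite /post_var -/pm e.
have [M0|Mn0] := eqVneq (M i x) 0.
  have hS := qM0 (mLam i) (wf0 i x) (mwf i x) (iwf i x) M0.
  rewrite /pm pm_q M0 invr0 mulr0.
  rewrite (qQE (mLam i) (wf0 i x) (mwf i x) (iwf i x) (iwf2 i x)) M0 hS.
  have -> : margE Lam prior pE i x = 0 by exact: M0.
  by rewrite mulr0; ring.
by rewrite divfK.
Qed.

Lemma Qmin i x c : post_var Lam prior pE i x * margE Lam prior pE i x <= Q i x c.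
Proof.
rewrite pv_q.
have [M0|Mn0] := eqVneq (M i x) 0.
  have hS := qM0 (mLam i) (wf0 i x) (mwf i x) (iwf i x) M0.
  rewrite pm_q M0 invr0 mulr0.
  rewrite (qQE (mLam i) (wf0 i x) (mwf i x) (iwf i x) (iwf2 i x) 0) M0 hS.
  rewrite (_ : _ + 0 = 0); last by ring.
  exact: qQ_ge0 (wf0 i x) c.
rewrite pm_q; have := qQ_min (mLam i) (wf0 i x) (mwf i x) (iwf i x) (iwf2 i x) c; apply.
rewrite lt0r Mn0 /=; apply: Rintegral_ge0 => t _; exact: wf0.
Qed.

Lemma pv_ge0 i x : 0 <= post_var Lam prior pE i x * margE Lam prior pE i x.
Proof. rewrite pv_q; exact: qQ_ge0 (wf0 i x) _. Qed.


Lemma wD_ge0 i (δ : X -> R) x : 0 <= δ x <= 1 -> 0 <= wD i δ x.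
Proof. by case: i => /andP[h0 h1] /=; rewrite ?subr_ge0. Qed.
Lemma wE_ge0 i (δ : X -> R) x : 0 <= δ x <= 1 -> 0 <= wE i δ x.
Proof. by case: i => /andP[h0 h1] /=; rewrite ?subr_ge0. Qed.

Lemma mwD i (δ : X -> R) : measurable_fun setT δ -> measurable_fun setT (wD i δ).
Proof.
move=> mδ; case: i => /=; last exact: mδ.
by apply: measurable_funB => //; exact: measurable_cst.
Qed.
Lemma mwE i (δ : X -> R) : measurable_fun setT δ -> measurable_fun setT (wE i δ).
Proof.
move=> mδ; case: i => /=; first exact: mδ.
by apply: measurable_funB => //; exact: measurable_cst.
Qed.

Definition Aint i (δ : X -> R) x :=
  (\int[leb]_(t in Lam i) (wD i δ x * pD i t x * prior i t)%:E)%E.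
Definition Bint i (δ : X -> R) (th : bool -> X -> R) x :=
  (\int[leb]_(t in Lam i) (wE i δ x * (th i x - t) ^+ 2 * pE i t x * prior i t)%:E)%E.

Lemma Aint_eq i δ x : 0 <= δ x <= 1 ->
  Aint i δ x = ((wD i δ x)%:E * margD Lam prior pD i x)%E.
Proof.
move=> hδ; rewrite /Aint /margD.
transitivity (\int[leb]_(t in Lam i) ((wD i δ x)%:E * (pD i t x * prior i t)%:E))%E.
  by apply: eq_integral => t _; rewrite -EFinM mulrA.
rewrite (@ge0_integralZl_EFin _ _ _ leb (Lam i) (mLam i)) //.
- by move=> t _; rewrite lee_fin mulr_ge0.
- apply/measurable_EFinP; apply: measurable_funM.
    apply: measurable_funTS.
    exact: (measurable_fun_pair1 (f := fun z : R * X => pD i z.1 z.2) x (mpD i)).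
  exact (measurable_funTS (mprior i)).
- exact (wD_ge0 i δ x hδ).
Qed.

Lemma Bint_eq i δ th x :
  Bint i δ th x = (wE i δ x * Q i x (th i x))%:E.
Proof.
rewrite /Bint.
transitivity (\int[leb]_(t in Lam i) ((wE i δ x)%:E * ((th i x - t) ^+ 2 * wf i x t)%:E))%E.
  by apply: eq_integral => t _; rewrite -EFinM /wf; congr (_%:E); ring.
have hi := iquad (mLam i) (wf0 i x) (mwf i x) (iwf i x) (iwf2 i x) (th i x).
rewrite (@integralZl _ _ _ leb (Lam i) (mLam i) _ hi).
by rewrite -(fineK (@integrable_fin_num _ _ _ leb (Lam i) (mLam i) _ hi)) -EFinM.
Qed.


Lemma mAint (i : bool) (δ : X -> R) : measurable_fun setT δ -> (forall x, 0 <= δ x <= 1) ->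
  measurable_fun setT (Aint i δ).
Proof.
move=> mδ hδ.
apply: (meas_param (mLam i) (fun x t => wD i δ x * pD i t x * prior i t)).
- apply: measurable_funM; first apply: measurable_funM.
  + exact (measurableT_comp (mwD i δ mδ) measurable_fst).
  + exact (measurableT_comp (mpD i) (@measurable_swap _ _ X R)).
  + exact (measurableT_comp (mprior i) measurable_snd).
- by move=> x t; rewrite mulr_ge0 // mulr_ge0 // (wD_ge0 i δ x (hδ x)).
Qed.

Lemma mBint (i : bool) (δ : X -> R) (th : bool -> X -> R) : measurable_fun setT δ -> (forall x, 0 <= δ x <= 1) ->
  measurable_fun setT (th i) ->
  measurable_fun setT (Bint i δ th).
Proof.
move=> mδ hδ mth.
apply: (meas_param (mLam i)
  (fun x t => wE i δ x * (th i x - t) ^+ 2 * pE i t x * prior i t)).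
- apply: measurable_funM; first apply: measurable_funM; first apply: measurable_funM.
  + exact (measurableT_comp (mwE i δ mδ) measurable_fst).
  + apply: measurable_funX; apply: measurable_funB.
      exact (measurableT_comp mth measurable_fst).
    exact: measurable_snd.
  + exact (measurableT_comp (mpE i) (@measurable_swap _ _ X R)).
  + exact (measurableT_comp (mprior i) measurable_snd).
- move=> x t; rewrite mulr_ge0 // mulr_ge0 // mulr_ge0 ?sqr_ge0 //.
  exact: (wE_ge0 i δ x (hδ x)).
Qed.

Lemma mpm i : measurable_fun setT (post_mean Lam prior pE i).
Proof.
pose F c x := (\int[leb]_(t in Lam i) ((c - t) ^+ 2 * wf i x t)%:E)%E.
pose F0 x := (\int[leb]_(t in Lam i) (wf i x t)%:E)%E.
have mF c : measurable_fun setT (F c).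
  apply: (meas_param (mLam i) (fun x t => (c - t) ^+ 2 * wf i x t)).
  - apply: measurable_funM.
      apply: measurable_funX; apply: measurable_funB.
        exact: measurable_cst.
      exact: measurable_snd.
    apply: measurable_funM.
      exact (measurableT_comp (mpE i) (@measurable_swap _ _ X R)).
    exact (measurableT_comp (mprior i) measurable_snd).
  - by move=> x t; rewrite mulr_ge0 ?sqr_ge0 // wf0.
have mF0 : measurable_fun setT F0.
  apply: (meas_param (mLam i) (fun x t => wf i x t)).
  - apply: measurable_funM.
      exact (measurableT_comp (mpE i) (@measurable_swap _ _ X R)).
    exact (measurableT_comp (mprior i) measurable_snd).
  - by move=> x t; rewrite wf0.
have -> : post_mean Lam prior pE i = fun x =>
    ((fine (F (-1) x) - fine (F 1 x)) / 4) * (fine (F0 x))^-1.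
  apply/funext => x.
  by rewrite pm_q (qTE (mLam i) (wf0 i x) (mwf i x) (iwf i x) (iwf2 i x)).
apply: measurable_funM.
  apply: measurable_funM; last exact: measurable_cst.
  by apply: measurable_funB; apply: measurableT_comp (mF _);
    exact: fine_measurable.
apply: measurableT_comp; first exact: meas_inv.
by apply: measurableT_comp mF0; exact: fine_measurable.
Qed.


Lemma Aint_ge0 i (δ : X -> R) x : (forall x, 0 <= δ x <= 1) -> (0 <= Aint i δ x)%E.
Proof.
move=> hδ; apply: integral_ge0 => t _; rewrite lee_fin mulr_ge0 // mulr_ge0 //.
exact: (wD_ge0 i δ x (hδ x)).
Qed.
Lemma Bint_ge0 i (δ : X -> R) th x : (forall x, 0 <= δ x <= 1) -> (0 <= Bint i δ th x)%E.
Proof.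
move=> hδ; apply: integral_ge0 => t _; rewrite lee_fin mulr_ge0 // mulr_ge0 //.
rewrite mulr_ge0 ?sqr_ge0 //; exact: (wE_ge0 i δ x (hδ x)).
Qed.

Definition Gf (δ : X -> R) (th : bool -> X -> R) x :=
  (\sum_(i : bool) ((PH i * lam i)%:E * Aint i δ x + (PH i * mu_ i)%:E * Bint i δ th x))%E.

Lemma J_eq (δ : X -> R) (th : bool -> X -> R) :
  measurable_fun setT δ -> (forall x, 0 <= δ x <= 1) ->
  (forall i, measurable_fun setT (th i)) ->
  J_NP mu Lam prior pD pE PH lam mu_ δ th = (\int[mu]_x Gf δ th x)%E.
Proof.
move=> mδ hδ mth.
have mA i := mAint i δ mδ hδ.
have mB i := mBint i δ th mδ hδ (mth i).
have A0 i x := Aint_ge0 i δ x hδ.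
have B0 i x := Bint_ge0 i δ th x hδ.
have mcA i : measurable_fun setT (fun x => ((PH i * lam i)%:E * Aint i δ x)%E).
  by apply: emeasurable_funM => //; exact: measurable_cst.
have mcB i : measurable_fun setT (fun x => ((PH i * mu_ i)%:E * Bint i δ th x)%E).
  by apply: emeasurable_funM => //; exact: measurable_cst.
have cA0 i x : (0 <= (PH i * lam i)%:E * Aint i δ x)%E.
  by rewrite mule_ge0 // lee_fin mulr_ge0.
have cB0 i x : (0 <= (PH i * mu_ i)%:E * Bint i δ th x)%E.
  by rewrite mule_ge0 // lee_fin mulr_ge0.
rewrite /Gf ge0_integral_sum //; last first.
  by move=> i x _; rewrite adde_ge0.
  by move=> i; apply: emeasurable_funD.
rewrite /J_NP; apply: eq_bigr => i _.
rewrite ge0_integralD //.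
rewrite !ge0_integralZl_EFin //; by rewrite mulr_ge0.
Qed.


Notation D0 x := (D_NP Lam prior pD pE PH lam mu_ false x).
Notation D1 x := (D_NP Lam prior pD pE PH lam mu_ true x).
Notation V i x := (post_var Lam prior pE i x * margE Lam prior pE i x).

Lemma D0E x : D0 x = ((PH true * lam true)%:E * margD Lam prior pD true x
   + ((PH false * mu_ false) * V false x)%:E)%E.
Proof. by rewrite /D_NP /= -(mulrA (PH false * mu_ false)). Qed.
Lemma D1E x : D1 x = ((PH false * lam false)%:E * margD Lam prior pD false x
   + ((PH true * mu_ true) * V true x)%:E)%E.
Proof. by rewrite /D_NP /= -(mulrA (PH true * mu_ true)). Qed.

Lemma margD_ge0 i x : (0 <= margD Lam prior pD i x)%E.
Proof. by apply: integral_ge0 => t _; rewrite lee_fin mulr_ge0. Qed.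

Lemma G_ge (δ : X -> R) th x : (forall x, 0 <= δ x <= 1) ->
  (mine (D0 x) (D1 x) <= Gf δ th x)%E.
Proof.
move=> hδ.
rewrite /Gf big_bool /= !Aint_eq // !Bint_eq /wD /wE D0E D1E.
apply: G_lb.
all: try by rewrite mulr_ge0.
all: try exact: margD_ge0.
all: try exact: hδ.
all: by rewrite pv_ge0 Qmin.
Qed.

Lemma G_star (δ : X -> R) x : 0 <= δ x <= 1 ->
  ((D0 x < D1 x)%E -> δ x = 0) -> ((D0 x > D1 x)%E -> δ x = 1) ->
  Gf δ (post_mean Lam prior pE) x = mine (D0 x) (D1 x).
Proof.
move=> hδ h0 h1.
rewrite /Gf big_bool /= !Aint_eq // !Bint_eq /wD /wE -!pv_q.
rewrite D0E D1E in h0 h1 *.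
apply: G_eq => //.
all: try by rewrite mulr_ge0.
all: try exact: margD_ge0.
all: exact: pv_ge0.
Qed.


Lemma Gf_ge0 (δ : X -> R) th x : (forall x, 0 <= δ x <= 1) -> (0 <= Gf δ th x)%E.
Proof.
move=> hδ; rewrite /Gf big_bool /=.
by rewrite !adde_ge0 // mule_ge0 ?lee_fin ?mulr_ge0 ?Aint_ge0 ?Bint_ge0.
Qed.

Lemma mGf (δ : X -> R) (th : bool -> X -> R) :
  measurable_fun setT δ -> (forall x, 0 <= δ x <= 1) ->
  (forall i, measurable_fun setT (th i)) ->
  measurable_fun setT (Gf δ th).
Proof.
move=> mδ hδ mth.
have -> : Gf δ th = fun x =>
  (((PH true * lam true)%:E * Aint true δ x + (PH true * mu_ true)%:E * Bint true δ th x)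
  + ((PH false * lam false)%:E * Aint false δ x + (PH false * mu_ false)%:E * Bint false δ th x))%E.
  by apply/funext => x; rewrite /Gf big_bool.
apply: emeasurable_funD; apply: emeasurable_funD; apply: emeasurable_funM;
  try exact: measurable_cst.
- exact: mAint.
- exact: mBint.
- exact: mAint.
- exact: mBint.
Qed.

Lemma main_result (δs : X -> R) :
  measurable_fun [set: X] δs -> (forall x, 0 <= δs x <= 1) ->
  (forall x, (D0 x < D1 x)%E -> δs x = 0) ->
  (forall x, (D0 x > D1 x)%E -> δs x = 1) ->
  ((forall (δ : X -> R) (th : bool -> X -> R),
     measurable_fun [set: X] δ ->
     (forall x, 0 <= δ x <= 1) ->
     (forall i, measurable_fun [set: X] (th i)) ->
     (forall i x, Lam i (th i x)) ->
     (J_NP mu Lam prior pD pE PH lam mu_ δs (post_mean Lam prior pE)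
      <= J_NP mu Lam prior pD pE PH lam mu_ δ th)%E)
  /\
  J_NP mu Lam prior pD pE PH lam mu_ δs (post_mean Lam prior pE)
  = (\int[mu]_x mine (D0 x) (D1 x))%E)%type.
Proof.
move=> ms hs h0 h1.
have mpm' : forall i, measurable_fun setT (post_mean Lam prior pE i) by move=> i; exact: mpm.
split.
  move=> δ th mδ hδ mth _.
  rewrite !J_eq //; apply: ge0_le_integral => //.
  - by move=> x _; exact: Gf_ge0.
  - exact: mGf.
  - exact: mGf.
  - by move=> x _; rewrite G_star //; [exact: G_ge | exact: h0 | exact: h1].
rewrite J_eq //; apply: eq_integral => x _.
by rewrite G_star //; [exact: h0 | exact: h1].
Qed.

End Main.

Theorem theorem4 (R : realType) (d : measure_display) (X : measurableType d)
  (mu : {measure set X -> \bar R})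
  (PH lam mu_ : bool -> R)
  (Lam : bool -> set R) (prior : bool -> R -> R)
  (pD pE : bool -> R -> X -> R)
  (delta_star : X -> R) :
  (* the reference measure dx is sigma-finite *)
  sigma_finite [set: X] mu ->
  (* prior probabilities of the hypotheses *)
  (forall i, 0 <= PH i) -> PH false + PH true = 1 ->
  (* non-negative cost coefficients *)
  (forall i, 0 <= lam i) -> (forall i, 0 <= mu_ i) ->
  (* parameter sets and prior densities p(theta_i | H_i) on Lam_i *)
  (forall i, measurable (Lam i)) ->
  (forall i t, 0 <= prior i t) ->
  (forall i, measurable_fun [set: R] (prior i)) ->
  (forall i, (\int[lebesgue_measure]_(t in Lam i) (prior i t)%:E = 1)%E) ->
  (* the two families of densities pD_{i,theta}, pE_{i,theta} *)
  (forall i t x, 0 <= pD i t x) -> (forall i t x, 0 <= pE i t x) ->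
  (forall i, measurable_fun [set: R * X] (fun z => pD i z.1 z.2)) ->
  (forall i, measurable_fun [set: R * X] (fun z => pE i z.1 z.2)) ->
  (forall i t, Lam i t -> (\int[mu]_x (pD i t x)%:E = 1)%E) ->
  (forall i t, Lam i t -> (\int[mu]_x (pE i t x)%:E = 1)%E) ->
  (* the posteriors built from pE have finite second moments (so that the
     posterior mean and variance exist) *)
  (forall i x, lebesgue_measure.-integrable (Lam i)
                 (fun t => (pE i t x * prior i t)%:E)) ->
  (forall i x, lebesgue_measure.-integrable (Lam i)
                 (fun t => (t ^+ 2 * pE i t x * prior i t)%:E)) ->
  (* the decision rule delta^star *)
  measurable_fun [set: X] delta_star ->
  (forall x, 0 <= delta_star x <= 1) ->
  (forall x, (D_NP Lam prior pD pE PH lam mu_ false x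
              < D_NP Lam prior pD pE PH lam mu_ true x)%E -> delta_star x = 0) ->
  (forall x, (D_NP Lam prior pD pE PH lam mu_ false x
              > D_NP Lam prior pD pE PH lam mu_ true x)%E -> delta_star x = 1) ->
  (* pi^star = (delta^star, posterior means) minimizes J^NP_u ... *)
  (forall (delta : X -> R) (thhat : bool -> X -> R),
     measurable_fun [set: X] delta ->
     (forall x, 0 <= delta x <= 1) ->
     (forall i, measurable_fun [set: X] (thhat i)) ->
     (forall i x, Lam i (thhat i x)) ->
     (J_NP mu Lam prior pD pE PH lam mu_ delta_star (post_mean Lam prior pE)
      <= J_NP mu Lam prior pD pE PH lam mu_ delta thhat)%E)
  /\
  (* ... and its value is the integral of min(D_0, D_1) *)
  J_NP mu Lam prior pD pE PH lam mu_ delta_star (post_mean Lam prior pE)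
  = (\int[mu]_x mine (D_NP Lam prior pD pE PH lam mu_ false x)
                     (D_NP Lam prior pD pE PH lam mu_ true x))%E.
Proof.
move=> _ PH0 _ lam0 mu0 mLam prior0 mprior _ pD0 pE0 mpD mpE _ _ iE iE2 ms hs h0 h1.
exact (main_result R d X mu PH lam mu_ Lam prior pD pE PH0 lam0 mu0 mLam prior0 mprior pD0 pE0 mpD mpE iE iE2 delta_star ms hs h0 h1).
Qed.
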